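(* Let $N=\overline{\{\langle f,g\rangle\in G(1,9): R(f,g,-)=0\}}\subset G(1,9)$. Regarding $G(1,9)$ in its Plücker embedding in $\mathbb{P}(\bigwedge^2\mathrm{Sym}^3\mathbb{C}^3)$ with affine cone $\widehat{G(1,9)}$, and using the $SL(3)$-decomposition $\bigwedge^2(\mathrm{Sym}^3\mathbb{C}^3)=\mathbb{S}_{(5,1)}\mathbb{C}^3\oplus\mathbb{S}_{(3,3)}\mathbb{C}^3$, one has $\mathbb{P}\left(\widehat{G(1,9)}\cap\mathbb{S}_{(5,1)}\mathbb{C}^3\right)=N$.
   Context: Plane cubics up to scalar are points of $\mathbb{P}^9=\mathbb{P}(\mathrm{Sym}^3\mathbb{C}^3)$; $G(1,9)$ is the Grassmannian of lines in $\mathbb{P}^9$; $\langle f,g\rangle$ is the line spanned by cubics $f,g$. $R$ is the alternating trilinear form on $\mathrm{Sym}^3\mathbb{C}^3$ determined by $R(l^3,m^3,n^3)=(\det(l,m,n))^3$ for linear forms $l,m,n$; $R(f,g,-)=0$ means $R(f,g,c)=0$ for all cubics $c$. $\mathbb{S}_{(5,1)}\mathbb{C}^3$ and $\mathbb{S}_{(3,3)}\mathbb{C}^3$ are the irreducible $SL(3)$-summands (Schur modules) of dimensions $35$ and $10$ respectively. *)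

(* Defs.v *)
From HB Require Import structures.
From mathcomp Require Import all_boot all_order all_algebra.
From mathcomp Require Import complex.
From mathcomp Require Import Rstruct.
From mathcomp Require Import mpoly.
Set Implicit Arguments. Unset Strict Implicit. Unset Printing Implicit Defensive.
Import GRing.Theory.
Local Open Scope ring_scope.

Definition CC : Type := Rdefinitions.R[i].

Definition is_cubic (f : {mpoly CC[3]}) : Prop := f \is 3.-homog.

Definition linform (l : 'rV[CC]_3) : {mpoly CC[3]} := \sum_(i < 3) l 0 i *: 'X_i.

Definition det3 (l m n : 'rV[CC]_3) : CC :=
  \det (\matrix_(i < 3, j < 3) (nth 0 [:: l; m; n] i) 0 j).

Definition is_R (R : {mpoly CC[3]} -> {mpoly CC[3]} -> {mpoly CC[3]} -> CC) : Prop :=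
  [/\ (forall a f f' g h, is_cubic f -> is_cubic f' -> is_cubic g -> is_cubic h ->
         R (a *: f + f') g h = a * R f g h + R f' g h),
      (forall a f g g' h, is_cubic f -> is_cubic g -> is_cubic g' -> is_cubic h ->
         R f (a *: g + g') h = a * R f g h + R f g' h),
      (forall a f g h h', is_cubic f -> is_cubic g -> is_cubic h -> is_cubic h' ->
         R f g (a *: h + h') = a * R f g h + R f g h'),
      (forall f g, is_cubic f -> is_cubic g ->
         [/\ R f f g = 0, R f g f = 0 & R g f f = 0]) &
      (forall l m n : 'rV[CC]_3,
         R (linform l ^+ 3) (linform m ^+ 3) (linform n ^+ 3) = det3 l m n ^+ 3)].

Definition R_vanishes (R : {mpoly CC[3]} -> {mpoly CC[3]} -> {mpoly CC[3]} -> CC)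
  (f g : {mpoly CC[3]}) : Prop :=
  forall h, is_cubic h -> R f g h = 0.

(* f, g linearly independent, i.e. they span a line <f,g> of P^9. *)
Definition indep (f g : {mpoly CC[3]}) : Prop :=
  forall a b : CC, a *: f + b *: g = 0 -> a = 0 /\ b = 0.

(* Model of /\^2 Sym^3 C^3: polynomials in x_0,x_1,x_2,y_0,y_1,y_2 (variables
   0,1,2 and 3,4,5), via f /\ g |-> f(x) g(y) - g(x) f(y) (an injective linear,
   SL(3)-equivariant map /\^2 Sym^3 -> Sym^3 (x) Sym^3). *)
Definition inx (f : {mpoly CC[3]}) : {mpoly CC[6]} :=
  f \mPo [tuple ('X_(lshift 3 i) : {mpoly CC[6]}) | i < 3].
Definition iny (f : {mpoly CC[3]}) : {mpoly CC[6]} :=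
  f \mPo [tuple ('X_(rshift 3 i) : {mpoly CC[6]}) | i < 3].
Definition wedge (f g : {mpoly CC[3]}) : {mpoly CC[6]} :=
  inx f * iny g - inx g * iny f.

Definition in_Lambda2 (p : {mpoly CC[6]}) : Prop :=
  exists (k : nat) (a b : 'I_k -> {mpoly CC[3]}),
    (forall i, is_cubic (a i) /\ is_cubic (b i)) /\ p = \sum_(i < k) wedge (a i) (b i).

(* Action of M in GL(3) (we use M in SL(3)) on /\^2 Sym^3 C^3 induced by the
   substitution x |-> M x (and y |-> M y): f /\ g |-> (f o M) /\ (g o M). *)
Definition act2 (M : 'M[CC]_3) (p : {mpoly CC[6]}) : {mpoly CC[6]} :=
  p \mPo [tuple (match split (i : 'I_(3 + 3)) with
                 | inl a => \sum_(j < 3) M a j *: 'X_(lshift 3 j)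
                 | inr a => \sum_(j < 3) M a j *: 'X_(rshift 3 j)
                 end : {mpoly CC[6]}) | i < 6].

Definition lin_subspace (U : {mpoly CC[6]} -> Prop) : Prop :=
  U 0 /\ (forall (a : CC) u v, U u -> U v -> U (a *: u + v)).

Definition has_dim (U : {mpoly CC[6]} -> Prop) (d : nat) : Prop :=
  exists b : 'I_d -> {mpoly CC[6]},
    (forall c : 'I_d -> CC, \sum_(i < d) c i *: b i = 0 -> forall i, c i = 0) /\
    (forall p, U p <-> exists c : 'I_d -> CC, p = \sum_(i < d) c i *: b i).

Definition SL3_invariant (U : {mpoly CC[6]} -> Prop) : Prop :=
  forall M : 'M[CC]_3, \det M = 1 -> forall u, U u -> U (act2 M u).

Definition SL3_irreducible (U : {mpoly CC[6]} -> Prop) : Prop :=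
  (exists u, U u /\ u <> 0) /\
  forall V : {mpoly CC[6]} -> Prop, lin_subspace V -> SL3_invariant V ->
    (forall v, V v -> U v) -> (forall v, V v -> v = 0) \/ (forall u, U u <-> V u).

(* W is the summand S_(5,1) C^3 of /\^2 Sym^3 C^3: the irreducible
   SL(3)-submodule of dimension 35. *)
Definition is_S51 (W : {mpoly CC[6]} -> Prop) : Prop :=
  [/\ forall w, W w -> in_Lambda2 w, has_dim W 35, SL3_invariant W & SL3_irreducible W].

(* Zariski closure in G(1,9), in its Pluecker embedding: the line <f0,g0>
   lies in the closure N of {<f,g> : R(f,g,-)=0} iff every polynomial in the
   (Pluecker) coordinates of /\^2 Sym^3 C^3 vanishing on all f /\ g with
   R(f,g,-) = 0 vanishes at f0 /\ g0.  Coordinates are coefficients p@_m. *)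
Definition in_N (R : {mpoly CC[3]} -> {mpoly CC[3]} -> {mpoly CC[3]} -> CC)
  (f0 g0 : {mpoly CC[3]}) : Prop :=
  forall (k : nat) (ms : 'I_k -> 'X_{1..6}) (P : {mpoly CC[k]}),
    (forall f g, is_cubic f -> is_cubic g -> indep f g -> R_vanishes R f g ->
       P.@[fun i => (wedge f g)@_(ms i)] = 0) ->
    P.@[fun i => (wedge f0 g0)@_(ms i)] = 0.

(* Main.v *)
Require Import Defs.
From HB Require Import structures.
From mathcomp Require Import all_boot all_order all_algebra.
From mathcomp Require Import complex.
From mathcomp Require Import Rstruct.
From mathcomp Require Import mpoly.
From mathcomp Require Import zify ring lra.
From mathcomp Require Import ssreflect ssrfun ssrbool.
Set Implicit Arguments. Unset Strict Implicit. Unset Printing Implicit Defensive.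
Import GRing.Theory Num.Theory.
Local Open Scope ring_scope.

Definition monl : seq (seq nat) :=
  [:: [::3;0;0]; [::0;3;0]; [::0;0;3]; [::2;1;0]; [::1;2;0];
      [::2;0;1]; [::1;0;2]; [::0;2;1]; [::0;1;2]; [::1;1;1]]%N.
Definition mon (i : 'I_10) : 'X_{1..3} :=
  [multinom (nth 0%N (nth [::] monl i) j) | j < 3].

Lemma mon_cover_b : all (fun a => all (fun b => all (fun c =>
   (a + b + c != 3)%N || has (fun i => nth [::] monl i == [:: a; b; c]) (iota 0 10))
   (iota 0 4)) (iota 0 4)) (iota 0 4).
Proof. by []. Qed.

Lemma mon_inj_b : all (fun i => all (fun j => (nth [::] monl i != nth [::] monl j) || (i == j))
   (iota 0 10)) (iota 0 10).
Proof. by []. Qed.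

Lemma mdeg3 (m : 'X_{1..3}) : mdeg m = (m ord0 + m (inord 1) + m (inord 2))%N.
Proof.
rewrite mdegE !big_ord_recr big_ord0 /= add0n; congr (_ + _ + _)%N; congr (m _); apply: val_inj; rewrite /= ?inordK //.
Qed.

Lemma mnm3P (m m' : 'X_{1..3}) : m ord0 = m' ord0 -> m (inord 1) = m' (inord 1) ->
  m (inord 2) = m' (inord 2) -> m = m'.
Proof.
move=> h0 h1 h2; apply/mnmP => -[[|[|[|j]]] Hj] //.
- by rewrite (_ : Ordinal Hj = ord0) //; apply: val_inj.
- by rewrite (_ : Ordinal Hj = inord 1) //; apply: val_inj; rewrite /= inordK.
- by rewrite (_ : Ordinal Hj = inord 2) //; apply: val_inj; rewrite /= inordK.
Qed.

Lemma mon_val (i : 'I_10) : [:: mon i ord0; mon i (inord 1); mon i (inord 2)] = nth [::] monl i.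
Proof.
rewrite /mon !mnmE /= !inordK //.
by case: i => [[|[|[|[|[|[|[|[|[|[|i]]]]]]]]]] Hi].
Qed.

Lemma mon_inj : injective mon.
Proof.
move=> i j Hij; have := mon_val i; rewrite Hij mon_val => E.
apply: val_inj => /=.
case: i {Hij} E => i Hi; case: j => j Hj /= E.
have H1 := allP mon_inj_b i; rewrite mem_iota add0n Hi in H1.
have H2 := allP (H1 isT) j; rewrite mem_iota add0n Hj E eqxx /= in H2.
exact/eqP/H2.
Qed.

Lemma mon_cover (m : 'X_{1..3}) : mdeg m = 3%N -> exists i, m = mon i.
Proof.
rewrite mdeg3 => H.
have Ha : (m ord0 < 4)%N by lia.
have Hb : (m (inord 1) < 4)%N by lia.
have Hc : (m (inord 2) < 4)%N by lia.
move: mon_cover_b => /allP/(_ (m ord0)); rewrite mem_iota add0n Ha => /(_ isT).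
move=> /allP/(_ (m (inord 1))); rewrite mem_iota add0n Hb => /(_ isT).
move=> /allP/(_ (m (inord 2))); rewrite mem_iota add0n Hc => /(_ isT).
rewrite H eqxx orFb => Hh.
case: (@hasP _ _ _ Hh) => i; rewrite mem_iota add0n => /= Hi /eqP E.
exists (Ordinal Hi); have := mon_val (Ordinal Hi); rewrite /= E => -[h0 h1 h2].
exact: mnm3P.
Qed.

Lemma mdeg_mon i : mdeg (mon i) = 3%N.
Proof. by rewrite mdeg3; have := mon_val i; case: i => [[|[|[|[|[|[|[|[|[|[|i]]]]]]]]]] Hi] //= [-> -> ->]. Qed.

Section Gen.
Variable K : numFieldType.

Definition is_cubicK (f : {mpoly K[3]}) : Prop := f \is 3.-homog.
Definition inxK (f : {mpoly K[3]}) : {mpoly K[6]} :=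
  f \mPo [tuple ('X_(lshift 3 i) : {mpoly K[6]}) | i < 3].
Definition inyK (f : {mpoly K[3]}) : {mpoly K[6]} :=
  f \mPo [tuple ('X_(rshift 3 i) : {mpoly K[6]}) | i < 3].
Definition wedgeK (f g : {mpoly K[3]}) : {mpoly K[6]} :=
  inxK f * inyK g - inxK g * inyK f.
Definition linformK (l : 'rV[K]_3) : {mpoly K[3]} := \sum_(i < 3) l 0 i *: 'X_i.
Definition det3K (l m n : 'rV[K]_3) : K :=
  \det (\matrix_(i < 3, j < 3) (nth 0 [:: l; m; n] i) 0 j).
Definition act2K (M : 'M[K]_3) (p : {mpoly K[6]}) : {mpoly K[6]} :=
  p \mPo [tuple (match split (i : 'I_(3 + 3)) with
                 | inl a => \sum_(j < 3) M a j *: 'X_(lshift 3 j)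
                 | inr a => \sum_(j < 3) M a j *: 'X_(rshift 3 j)
                 end : {mpoly K[6]}) | i < 6].

Lemma cubicE (f : {mpoly K[3]}) : is_cubicK f ->
  f = \sum_i f@_(mon i) *: 'X_[mon i].
Proof.
move=> Hf; apply/mpolyP => m.
rewrite (raddf_sum (mcoeff m)) /=.
under eq_bigr do rewrite mcoeffZ mcoeffX.
case: (boolP (mdeg m == 3%N)) => [/eqP /mon_cover [i ->]|Hm].
  rewrite (bigD1 i) //= eqxx mulr1 big1 ?addr0 // => j /negbTE.
  by rewrite (inj_eq mon_inj) => ->; rewrite mulr0.
rewrite (dhomog_nemf_coeff Hf Hm) big1 // => j _.
case: eqP => [E|]; last by rewrite mulr0.
by move: Hm; rewrite -E => /eqP []; apply: mdeg_mon.
Qed.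

Lemma is_cubicK_X i : is_cubicK 'X_[mon i].
Proof. by rewrite /is_cubicK dhomogX; apply/eqP; apply: mdeg_mon. Qed.

Lemma is_cubicKD f g : is_cubicK f -> is_cubicK g -> is_cubicK (f + g).
Proof. exact: dhomogD. Qed.
Lemma is_cubicKZ (a : K) f : is_cubicK f -> is_cubicK (a *: f).
Proof. exact: dhomogZ. Qed.
Lemma is_cubicK0 : is_cubicK 0.
Proof. exact: dhomog0. Qed.
Lemma is_cubicKN f : is_cubicK f -> is_cubicK (- f).
Proof. by move=> H; rewrite -scaleN1r; apply: is_cubicKZ. Qed.
Lemma is_cubicK_sum (I : Type) (r : seq I) (P : pred I) (F : I -> {mpoly K[3]}) :
  (forall i, P i -> is_cubicK (F i)) -> is_cubicK (\sum_(i <- r | P i) F i).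
Proof.
move=> H; elim/big_rec: _ => [|i x Pi Hx]; first exact: is_cubicK0.
exact: is_cubicKD (H _ Pi) Hx.
Qed.

Definition lx (m : 'X_{1..3}) : 'X_{1..6} :=
  [multinom (match split (i : 'I_(3 + 3)) with inl a => m a | inr _ => 0%N end) | i < 6].
Definition ry (m : 'X_{1..3}) : 'X_{1..6} :=
  [multinom (match split (i : 'I_(3 + 3)) with inl _ => 0%N | inr a => m a end) | i < 6].

Lemma split_l (i : 'I_3) : split (lshift 3 i) = inl i.
Proof. exact: (@unsplitK 3 3 (inl i)). Qed.
Lemma split_r (i : 'I_3) : split (rshift 3 i) = inr i.
Proof. exact: (@unsplitK 3 3 (inr i)). Qed.

Lemma lx_l m (i : 'I_3) : lx m (lshift 3 i) = m i.
Proof. by rewrite /lx mnmE split_l. Qed.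
Lemma lx_r m (i : 'I_3) : lx m (rshift 3 i) = 0%N.
Proof. by rewrite /lx mnmE split_r. Qed.
Lemma ry_l m (i : 'I_3) : ry m (lshift 3 i) = 0%N.
Proof. by rewrite /ry mnmE split_l. Qed.
Lemma ry_r m (i : 'I_3) : ry m (rshift 3 i) = m i.
Proof. by rewrite /ry mnmE split_r. Qed.

Lemma inxKX m : inxK 'X_[m] = 'X_[lx m].
Proof.
rewrite /inxK comp_mpolyX [RHS]mpolyXE_id.
rewrite (_ : \prod_(i < 6) 'X_i ^+ lx m i = \prod_(i < 3 + 3) ('X_i : {mpoly K[6]}) ^+ lx m i) //.
rewrite big_split_ord /=.
rewrite [X in _ = _ * X]big1 ?mulr1; last by move=> i _; rewrite lx_r expr0.
by apply: eq_bigr => i _; rewrite tnth_mktuple lx_l.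
Qed.

Lemma inyKX m : inyK 'X_[m] = 'X_[ry m].
Proof.
rewrite /inyK comp_mpolyX [RHS]mpolyXE_id.
rewrite (_ : \prod_(i < 6) 'X_i ^+ ry m i = \prod_(i < 3 + 3) ('X_i : {mpoly K[6]}) ^+ ry m i) //.
rewrite big_split_ord /=.
rewrite [X in _ = X * _]big1 ?mul1r; last by move=> i _; rewrite ry_l expr0.
by apply: eq_bigr => i _; rewrite tnth_mktuple ry_r.
Qed.

Definition coef6 (i j : 'I_10) : 'X_{1..6} := (lx (mon i) + ry (mon j))%MM.

Lemma coef6_inj i j a b : coef6 i j = coef6 a b -> i = a /\ j = b.
Proof.
move=> /mnmP E; split; apply: mon_inj; apply/mnmP => k.
  by have := E (lshift 3 k); rewrite !mnmDE !lx_l !ry_l !addn0.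
by have := E (rshift 3 k); rewrite !mnmDE !lx_r !ry_r !add0n.
Qed.

Lemma inxK_cubic f : is_cubicK f -> inxK f = \sum_i f@_(mon i) *: 'X_[lx (mon i)].
Proof.
move=> Hf; rewrite {1}(cubicE Hf) /inxK raddf_sum /=.
by apply: eq_bigr => i _; rewrite comp_mpolyZ -/(inxK _) inxKX.
Qed.
Lemma inyK_cubic f : is_cubicK f -> inyK f = \sum_i f@_(mon i) *: 'X_[ry (mon i)].
Proof.
move=> Hf; rewrite {1}(cubicE Hf) /inyK raddf_sum /=.
by apply: eq_bigr => i _; rewrite comp_mpolyZ -/(inyK _) inyKX.
Qed.

Lemma prod_coef f g a b : is_cubicK f -> is_cubicK g ->
  (inxK f * inyK g)@_(coef6 a b) = f@_(mon a) * g@_(mon b).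
Proof.
move=> Hf Hg; rewrite inxK_cubic // inyK_cubic // big_distrlr /=.
rewrite (raddf_sum (mcoeff _)) /=.
under eq_bigr => i _ do rewrite (raddf_sum (mcoeff _)) /=.
under eq_bigr => i _ do under eq_bigr => j _ do
  rewrite -scalerAr -scalerAl -mpolyXD !mcoeffZ mcoeffX.
rewrite (bigD1 a) //= (bigD1 b) //= eqxx mulr1.
rewrite [X in _ * _ + X + _]big1; last first.
  move=> j Hj; case: eqP => [/coef6_inj [_ E]|]; last by rewrite !mulr0.
  by move: Hj; rewrite E eqxx.
rewrite addr0 [X in _ + X]big1; first by rewrite addr0 mulrC.
move=> i Hi; apply: big1 => j _.
case: eqP => [/coef6_inj [E _]|_]; last by rewrite !mulr0.
by move: Hi; rewrite E eqxx.
Qed.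

Lemma wedgeK_coef f g a b : is_cubicK f -> is_cubicK g ->
  (wedgeK f g)@_(coef6 a b) = f@_(mon a) * g@_(mon b) - g@_(mon a) * f@_(mon b).
Proof. by move=> Hf Hg; rewrite /wedgeK mcoeffB !prod_coef. Qed.

End Gen.

Section GenR.
Variable K : numFieldType.
Local Notation cub := (@is_cubicK K).
Local Notation poly3 := {mpoly K[3]}.

Definition is_RK (R : poly3 -> poly3 -> poly3 -> K) : Prop :=
  [/\ (forall a f f' g h, cub f -> cub f' -> cub g -> cub h ->
         R (a *: f + f') g h = a * R f g h + R f' g h),
      (forall a f g g' h, cub f -> cub g -> cub g' -> cub h ->
         R f (a *: g + g') h = a * R f g h + R f g' h),
      (forall a f g h h', cub f -> cub g -> cub h -> cub h' ->
         R f g (a *: h + h') = a * R f g h + R f g h'),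
      (forall f g, cub f -> cub g ->
         [/\ R f f g = 0, R f g f = 0 & R g f f = 0]) &
      (forall l m n : 'rV[K]_3,
         R (linformK l ^+ 3) (linformK m ^+ 3) (linformK n ^+ 3) = det3K l m n ^+ 3)].

Lemma dbl0 (x : K) : x = x + x -> x = 0.
Proof. by move=> E; apply: (@addrI _ x); rewrite addr0 -E. Qed.

Variable R : poly3 -> poly3 -> poly3 -> K.
Hypothesis HR : is_RK R.

Lemma R1sum (I : Type) (r : seq I) (c : I -> K) (F : I -> poly3) g h :
  (forall i, cub (F i)) -> cub g -> cub h ->
  R (\sum_(i <- r) c i *: F i) g h = \sum_(i <- r) c i * R (F i) g h.
Proof.
case: HR => H1 _ _ _ _ HF Hg Hh; elim: r => [|x r IH].
  rewrite !big_nil; have := H1 1 0 0 g h (@is_cubicK0 K) (@is_cubicK0 K) Hg Hh.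
  by rewrite scale1r addr0 mul1r; apply: dbl0.
rewrite !big_cons H1 ?IH //; apply: is_cubicK_sum => i _; exact: is_cubicKZ.
Qed.

Lemma R2sum (I : Type) (r : seq I) (c : I -> K) (F : I -> poly3) f h :
  (forall i, cub (F i)) -> cub f -> cub h ->
  R f (\sum_(i <- r) c i *: F i) h = \sum_(i <- r) c i * R f (F i) h.
Proof.
case: HR => _ H1 _ _ _ HF Hf Hh; elim: r => [|x r IH].
  rewrite !big_nil; have := H1 1 f 0 0 h Hf (@is_cubicK0 K) (@is_cubicK0 K) Hh.
  by rewrite scale1r addr0 mul1r; apply: dbl0.
rewrite !big_cons H1 ?IH //; apply: is_cubicK_sum => i _; exact: is_cubicKZ.
Qed.

Lemma R3sum (I : Type) (r : seq I) (c : I -> K) (F : I -> poly3) f g :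
  (forall i, cub (F i)) -> cub f -> cub g ->
  R f g (\sum_(i <- r) c i *: F i) = \sum_(i <- r) c i * R f g (F i).
Proof.
case: HR => _ _ H1 _ _ HF Hf Hg; elim: r => [|x r IH].
  rewrite !big_nil; have := H1 1 f g 0 0 Hf Hg (@is_cubicK0 K) (@is_cubicK0 K).
  by rewrite scale1r addr0 mul1r; apply: dbl0.
rewrite !big_cons H1 ?IH //; apply: is_cubicK_sum => i _; exact: is_cubicKZ.
Qed.

Lemma R_anti f g h : cub f -> cub g -> cub h -> R g f h = - R f g h.
Proof.
case: HR => H1 H2 _ Halt _ Hf Hg Hh.
have Hfg := is_cubicKD Hf Hg.
have [E _ _] := Halt _ _ Hfg Hh.
have [Ef _ _] := Halt _ _ Hf Hh; have [Eg _ _] := Halt _ _ Hg Hh.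
move: E; rewrite (_ : f + g = 1 *: f + g); last by rewrite scale1r.
rewrite H1 //; last by rewrite scale1r.
rewrite !H2 // ?scale1r // !mul1r Ef Eg add0r addr0 => /eqP.
by rewrite addr_eq0 => /eqP ->; rewrite opprK.
Qed.

Definition Phi (p : {mpoly K[6]}) (h : poly3) : K :=
  \sum_i \sum_j p@_(coef6 i j) * R 'X_[mon i] 'X_[mon j] h.

Lemma Phi_lin (a : K) p q h : Phi (a *: p + q) h = a * Phi p h + Phi q h.
Proof.
rewrite /Phi mulr_sumr -big_split /=; apply: eq_bigr => i _.
rewrite mulr_sumr -big_split /=; apply: eq_bigr => j _.
by rewrite mcoeffD mcoeffZ mulrDl mulrA.
Qed.

Lemma PhiD p q h : Phi (p + q) h = Phi p h + Phi q h.
Proof. by rewrite -[p]scale1r Phi_lin mul1r scale1r. Qed.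

Lemma Phi0 h : Phi 0 h = 0.
Proof. by rewrite /Phi big1 // => i _; rewrite big1 // => j _; rewrite mcoeff0 mul0r. Qed.

Lemma Phi_sum (I : Type) (r : seq I) (F : I -> {mpoly K[6]}) h :
  Phi (\sum_(i <- r) F i) h = \sum_(i <- r) Phi (F i) h.
Proof.
elim: r => [|x r IH]; first by rewrite !big_nil Phi0.
by rewrite !big_cons PhiD IH.
Qed.

Lemma R_expand f g h : cub f -> cub g -> cub h ->
  R f g h = \sum_i \sum_j f@_(mon i) * g@_(mon j) * R 'X_[mon i] 'X_[mon j] h.
Proof.
move=> Hf Hg Hh.
rewrite {1}(cubicE Hf) (R1sum _ _ (fun i => is_cubicK_X _ i) Hg Hh).
apply: eq_bigr => i _.
rewrite {1}(cubicE Hg) (R2sum _ _ (fun j => is_cubicK_X _ j) (is_cubicK_X _ i) Hh).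
by rewrite mulr_sumr; apply: eq_bigr => j _; rewrite mulrA.
Qed.

Lemma Phi_wedge f g h : cub f -> cub g -> cub h ->
  Phi (wedgeK f g) h = 2%:R * R f g h.
Proof.
move=> Hf Hg Hh; rewrite /Phi.
under eq_bigr => i _ do under eq_bigr => j _ do rewrite wedgeK_coef // mulrBl.
under eq_bigr => i _ do rewrite sumrB.
by rewrite sumrB -!R_expand // (R_anti Hf Hg Hh) opprK mulr2n mulrDl mul1r.
Qed.
End GenR.

Definition o1 : 'I_3 := @Ordinal 3 1 isT.
Definition o2 : 'I_3 := @Ordinal 3 2 isT.

Lemma sum3 (V : zmodType) (F : 'I_3 -> V) : \sum_(i < 3) F i = F ord0 + F o1 + F o2.
Proof. rewrite !big_ord_recr big_ord0 /= add0r; congr (F _ + F _ + F _); apply: val_inj; reflexivity. Qed.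

Section Gen3.
Variable K : numFieldType.

Definition vec3 (a b c : K) : 'rV[K]_3 := \row_(j < 3) nth 0 [:: a; b; c] j.

Lemma linform_vec3 a b c :
  linformK (vec3 a b c) = a *: 'X_ord0 + b *: 'X_o1 + c *: 'X_o2.
Proof. by rewrite /linformK sum3 !mxE. Qed.

Lemma det33 (A : 'M[K]_3) : \det A =
  A ord0 ord0 * (A o1 o1 * A o2 o2 - A o1 o2 * A o2 o1)
  - A ord0 o1 * (A o1 ord0 * A o2 o2 - A o1 o2 * A o2 ord0)
  + A ord0 o2 * (A o1 ord0 * A o2 o1 - A o1 o1 * A o2 ord0).
Proof.
pose a (i j : nat) := A (inord i) (inord j).
have HA : forall i j : 'I_3, A i j = a i j by move=> i j; rewrite /a !inord_val.
rewrite (expand_det_row _ ord0) sum3 /cofactor.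
rewrite !(expand_det_row _ ord0) !big_ord_recr !big_ord0 /cofactor !det_mx11 !mxE !HA /=.
rewrite /a /=. ring.
Qed.


Definition nvl : seq (seq K) :=
  [:: [:: 1; 0; 0]; [:: 0; 1; 0]; [:: 0; 0; 1]; [:: 1; 1; 0]; [:: 1; -1; 0];
      [:: 1; 0; 1]; [:: 1; 0; -1]; [:: 0; 1; 1]; [:: 0; 1; -1]; [:: 1; 1; 1]].
Definition nv (k : 'I_10) : 'rV[K]_3 :=
  vec3 (nth 0 (nth [::] nvl k) 0) (nth 0 (nth [::] nvl k) 1) (nth 0 (nth [::] nvl k) 2).
Definition cube (k : 'I_10) : {mpoly K[3]} := linformK (nv k) ^+ 3.

Definition spanC (p : {mpoly K[3]}) := exists c : 'I_10 -> K, p = \sum_k c k *: cube k.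

Lemma spanC0 : spanC 0.
Proof. by exists (fun _ => 0); rewrite big1 // => k _; rewrite scale0r. Qed.

Lemma spanC_lin a p q : spanC p -> spanC q -> spanC (a *: p + q).
Proof.
move=> [c ->] [d ->]; exists (fun k => a * c k + d k).
rewrite scaler_sumr -big_split /=; apply: eq_bigr => k _.
by rewrite scalerDl scalerA.
Qed.

Lemma spanC_cube k : spanC (cube k).
Proof.
exists (fun j => (j == k)%:R); rewrite (bigD1 k) //= eqxx scale1r big1 ?addr0 //.
by move=> j /negbTE ->; rewrite scale0r.
Qed.

Lemma spanCZ a p : spanC p -> spanC (a *: p).
Proof. by move=> H; rewrite -[_ *: _]addr0; apply: spanC_lin => //; apply: spanC0. Qed.
Lemma spanCD p q : spanC p -> spanC q -> spanC (p + q).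
Proof. by move=> H1 H2; rewrite -[p]scale1r; apply: spanC_lin. Qed.
Lemma spanCN p : spanC p -> spanC (- p).
Proof. by move=> H; rewrite -scaleN1r; apply: spanCZ. Qed.
Lemma spanCB p q : spanC p -> spanC q -> spanC (p - q).
Proof. by move=> H1 H2; apply: spanCD => //; apply: spanCN. Qed.
Lemma spanC6 p : spanC (6%:R *: p) -> spanC p.
Proof.
move=> H; have -> : p = (6%:R)^-1 *: (6%:R *: p).
  by rewrite scalerA mulVf ?scale1r // pnatr_eq0.
exact: spanCZ.
Qed.

Local Notation x := ('X_ord0 : {mpoly K[3]}).
Local Notation y := ('X_o1 : {mpoly K[3]}).
Local Notation z := ('X_o2 : {mpoly K[3]}).

Lemma cubeE0 : cube (@Ordinal 10 0 isT) = x ^+ 3.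
Proof. by rewrite /cube /nv /= linform_vec3 ?scale1r ?scale0r ?scaleN1r ?addr0 ?add0r. Qed.

Lemma prod3 (F : 'I_3 -> {mpoly K[3]}) : \prod_(i < 3) F i = F ord0 * F o1 * F o2.
Proof. rewrite !big_ord_recr big_ord0 /= mul1r; congr (F _ * F _ * F _); apply: val_inj; reflexivity. Qed.

Lemma monE k : 'X_[mon k] = x ^+ (mon k ord0) * y ^+ (mon k o1) * z ^+ (mon k o2).
Proof. by rewrite mpolyXE_id prod3. Qed.

Local Notation "'C' n" := (cube (@Ordinal 10 n isT)) (at level 0, n at level 0).

Lemma spanX_low (k : 'I_10) : (k < 9)%N -> spanC 'X_[mon k].
Proof.
have hc := spanC_cube.
case: k => [[|[|[|[|[|[|[|[|[|[|k]]]]]]]]]] Hk] //= _; rewrite monE /mon !mnmE /=.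
- rewrite (_ : _ * _ = C 0); first exact: hc.
  by rewrite /cube /nv /= linform_vec3 ?scale1r ?scale0r ?scaleN1r ?addr0 ?add0r; ring.
- rewrite (_ : _ * _ = C 1); first exact: hc.
  by rewrite /cube /nv /= linform_vec3 ?scale1r ?scale0r ?scaleN1r ?addr0 ?add0r; ring.
- rewrite (_ : _ * _ = C 2); first exact: hc.
  by rewrite /cube /nv /= linform_vec3 ?scale1r ?scale0r ?scaleN1r ?addr0 ?add0r; ring.
- apply: spanC6; rewrite (_ : _ *: _ = C 3 - C 4 - 2%:R *: C 1).
    by apply: spanCB; [apply: spanCB|apply: spanCZ].
  by rewrite /cube /nv /= !linform_vec3 ?scale1r ?scale0r ?scaleN1r ?addr0 ?add0r !scaler_nat; ring.
- apply: spanC6; rewrite (_ : _ *: _ = C 3 + C 4 - 2%:R *: C 0).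
    by apply: spanCB; [apply: spanCD|apply: spanCZ].
  by rewrite /cube /nv /= !linform_vec3 ?scale1r ?scale0r ?scaleN1r ?addr0 ?add0r !scaler_nat; ring.
- apply: spanC6; rewrite (_ : _ *: _ = C 5 - C 6 - 2%:R *: C 2).
    by apply: spanCB; [apply: spanCB|apply: spanCZ].
  by rewrite /cube /nv /= !linform_vec3 ?scale1r ?scale0r ?scaleN1r ?addr0 ?add0r !scaler_nat; ring.
- apply: spanC6; rewrite (_ : _ *: _ = C 5 + C 6 - 2%:R *: C 0).
    by apply: spanCB; [apply: spanCD|apply: spanCZ].
  by rewrite /cube /nv /= !linform_vec3 ?scale1r ?scale0r ?scaleN1r ?addr0 ?add0r !scaler_nat; ring.
- apply: spanC6; rewrite (_ : _ *: _ = C 7 - C 8 - 2%:R *: C 2).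
    by apply: spanCB; [apply: spanCB|apply: spanCZ].
  by rewrite /cube /nv /= !linform_vec3 ?scale1r ?scale0r ?scaleN1r ?addr0 ?add0r !scaler_nat; ring.
- apply: spanC6; rewrite (_ : _ *: _ = C 7 + C 8 - 2%:R *: C 1).
    by apply: spanCB; [apply: spanCD|apply: spanCZ].
  by rewrite /cube /nv /= !linform_vec3 ?scale1r ?scale0r ?scaleN1r ?addr0 ?add0r !scaler_nat; ring.
Qed.

Local Notation "'M' n" := ('X_[mon (@Ordinal 10 n isT)] : {mpoly K[3]}) (at level 0, n at level 0).

Lemma spanX k : spanC 'X_[mon k].
Proof.
case: (ltnP k 9) => [|Hk]; first exact: spanX_low.
have -> : k = @Ordinal 10 9 isT by apply: val_inj => /=; case: k Hk => [[|[|[|[|[|[|[|[|[|[|k]]]]]]]]]] Hk'].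
have hl := spanX_low.
apply: spanC6.
rewrite (_ : _ *: _ = C 9 - M 0 - M 1 - M 2 - 3%:R *: (M 3 + M 4 + M 5 + M 6 + M 7 + M 8)).
  by repeat first [apply: spanCB | apply: spanCD | apply: spanCZ | exact: spanC_cube | exact: hl].
rewrite !monE /mon !mnmE /=.
by rewrite /cube /nv /= !linform_vec3 ?scale1r ?scale0r ?scaleN1r ?addr0 ?add0r !scaler_nat; ring.
Qed.

End Gen3.
Arguments cube {K}.
Arguments nv {K}.
Arguments nvl {K}.

Section Gen4.
Variable K : numFieldType.
Local Notation cub := (@is_cubicK K).
Implicit Types (n l m : 'rV[K]_3) (M : 'M[K]_3).

Lemma spanC_sum (I : Type) (r : seq I) (c : I -> K) (F : I -> {mpoly K[3]}) :
  (forall i, spanC (F i)) -> spanC (\sum_(i <- r) c i *: F i).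
Proof.
move=> H; elim/big_rec: _ => [|i p _ Hp]; first exact: spanC0.
exact: spanC_lin.
Qed.

Lemma cubic_span h : cub h -> spanC h.
Proof. by move=> Hh; rewrite (cubicE Hh); apply: spanC_sum => i; apply: spanX. Qed.

Lemma linform_hom n : linformK n \is 1.-homog.
Proof.
rewrite /linformK; apply: rpred_sum => i _; apply: rpredZ.
by rewrite dhomogX; apply/eqP; apply: mdeg1.
Qed.

Lemma cubic_lin3 n : cub (linformK n ^+ 3).
Proof. by rewrite /is_cubicK; have := dhomogMn 3 (linform_hom n); rewrite mul1n. Qed.

Lemma cubic_cube k : cub (cube k).
Proof. exact: cubic_lin3. Qed.

Lemma span_cubic h : spanC h -> cub h.
Proof. by case=> c ->; apply: is_cubicK_sum => k _; apply: is_cubicKZ; apply: cubic_cube. Qed.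

Definition compM (M : 'M[K]_3) (f : {mpoly K[3]}) : {mpoly K[3]} :=
  f \mPo [tuple (\sum_(j < 3) M a j *: 'X_j : {mpoly K[3]}) | a < 3].

Lemma compM_lin M a f g : compM M (a *: f + g) = a *: compM M f + compM M g.
Proof. by rewrite /compM comp_mpolyD comp_mpolyZ. Qed.

Lemma compM_linform M n : compM M (linformK n) = linformK (n *m M).
Proof.
rewrite /compM /linformK raddf_sum /=.
under eq_bigr => a _ do rewrite comp_mpolyZ comp_mpolyXU -tnth_nth tnth_mktuple scaler_sumr.
rewrite exchange_big /=; apply: eq_bigr => j _; rewrite mxE scaler_suml.
by apply: eq_bigr => a _; rewrite scalerA.
Qed.

Lemma compM_cube M n : compM M (linformK n ^+ 3) = linformK (n *m M) ^+ 3.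
Proof. by rewrite /compM rmorphXn /= -/(compM M _) compM_linform. Qed.

Lemma det3_mul l m n M : det3K (l *m M) (m *m M) (n *m M) = det3K l m n * \det M.
Proof.
rewrite /det3K -det_mulmx; congr (\det _); apply/matrixP => i j; rewrite !mxE.
case: i => [[|[|[|i]]] Hi] //=; rewrite mxE; apply: eq_bigr => k _; rewrite mxE //.
Qed.

End Gen4.

Section Gen5.
Variable K : numFieldType.
Local Notation cub := (@is_cubicK K).
Implicit Types (n l m : 'rV[K]_3) (M : 'M[K]_3).
Variable R : {mpoly K[3]} -> {mpoly K[3]} -> {mpoly K[3]} -> K.
Hypothesis HR : is_RK R.

Lemma R_triple (u v w : 'I_10 -> 'rV[K]_3) (a b c : 'I_10 -> K) :
  R (\sum_k a k *: linformK (u k) ^+ 3) (\sum_k b k *: linformK (v k) ^+ 3)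
    (\sum_k c k *: linformK (w k) ^+ 3) =
  \sum_i \sum_j \sum_k a i * b j * c k * det3K (u i) (v j) (w k) ^+ 3.
Proof.
have Hc := cubic_lin3.
have Hs : forall (d : 'I_10 -> K) (t : 'I_10 -> 'rV[K]_3), cub (\sum_k d k *: linformK (t k) ^+ 3).
  by move=> d t; apply: is_cubicK_sum => k _; apply: is_cubicKZ.
rewrite R1sum //; apply: eq_bigr => i _.
rewrite R2sum // mulr_sumr; apply: eq_bigr => j _.
rewrite R3sum // !mulr_sumr; apply: eq_bigr => k _.
by case: HR => _ _ _ _ ->; rewrite !mulrA.
Qed.

Lemma compM_sum M (a : 'I_10 -> K) (F : 'I_10 -> {mpoly K[3]}) :
  compM M (\sum_k a k *: F k) = \sum_k a k *: compM M (F k).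
Proof. by rewrite /compM raddf_sum /=; apply: eq_bigr => k _; rewrite comp_mpolyZ. Qed.

Lemma R_compM M f g h : cub f -> cub g -> cub h ->
  R (compM M f) (compM M g) (compM M h) = \det M ^+ 3 * R f g h.
Proof.
move=> /cubic_span [a ->] /cubic_span [b ->] /cubic_span [c ->].
rewrite !compM_sum; under eq_bigr => k _ do rewrite compM_cube.
under [in X in R _ X _]eq_bigr => k _ do rewrite compM_cube.
under [in X in R _ _ X]eq_bigr => k _ do rewrite compM_cube.
rewrite /cube !R_triple !mulr_sumr; apply: eq_bigr => i _.
rewrite !mulr_sumr; apply: eq_bigr => j _.
rewrite !mulr_sumr; apply: eq_bigr => k _.
by rewrite det3_mul exprMn; ring.
Qed.

Lemma compM_cubic M f : cub f -> cub (compM M f).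
Proof.
move=> /cubic_span [a ->]; rewrite compM_sum; apply: is_cubicK_sum => k _.
by apply: is_cubicKZ; rewrite compM_cube; apply: cubic_lin3.
Qed.

Definition crs l m : 'I_3 -> K := fun j =>
  nth 0 [:: l 0 o1 * m 0 o2 - l 0 o2 * m 0 o1; l 0 o2 * m 0 ord0 - l 0 ord0 * m 0 o2;
           l 0 ord0 * m 0 o1 - l 0 o1 * m 0 ord0] j.

Lemma meval_linform n (u : 'I_3 -> K) : (linformK n).@[u] = \sum_j n 0 j * u j.
Proof. by rewrite /linformK raddf_sum /=; apply: eq_bigr => j _; rewrite mevalZ mevalXU. Qed.

Lemma det3_crs l m n : det3K l m n = (linformK n).@[crs l m].
Proof. rewrite meval_linform sum3 /det3K det33 !mxE /crs /=. ring. Qed.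

Lemma R_eval l m h : cub h ->
  R (linformK l ^+ 3) (linformK m ^+ 3) h = h.@[crs l m].
Proof.
move=> /cubic_span [c ->]; rewrite R3sum; try exact: cubic_lin3; last exact: cubic_cube.
rewrite raddf_sum /=; apply: eq_bigr => k _; rewrite mevalZ /cube; congr (_ * _).
  by case: HR => _ _ _ _ ->; rewrite det3_crs rmorphXn.
exact: HR.
Qed.

End Gen5.

Lemma comp_mpolyA (K : comRingType) (n k l : nat) (p : {mpoly K[n]})
  (lq : n.-tuple {mpoly K[k]}) (lr : k.-tuple {mpoly K[l]}) :
  (p \mPo lq) \mPo lr = p \mPo [tuple (tnth lq i \mPo lr) | i < n].
Proof.
rewrite [p \mPo lq]comp_mpolyE [RHS]comp_mpolyE raddf_sum /=; apply: eq_bigr => m _.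
rewrite comp_mpolyZ rmorph_prod /=; congr (_ *: _); apply: eq_bigr => i _.
by rewrite rmorphXn tnth_mktuple.
Qed.

Section Gen6.
Variable K : numFieldType.
Implicit Types (M : 'M[K]_3).

Lemma act2_inx M f : act2K M (inxK f) = inxK (compM M f).
Proof.
rewrite /act2K /inxK /compM !comp_mpolyA; congr (f \mPo _).
apply: eq_from_tnth => i; rewrite !tnth_mktuple comp_mpolyXU -tnth_nth tnth_mktuple split_l.
rewrite raddf_sum /=; apply: eq_bigr => j _; rewrite comp_mpolyZ comp_mpolyXU -tnth_nth.
by rewrite tnth_mktuple.
Qed.

Lemma act2_iny M f : act2K M (inyK f) = inyK (compM M f).
Proof.
rewrite /act2K /inyK /compM !comp_mpolyA; congr (f \mPo _).
apply: eq_from_tnth => i; rewrite !tnth_mktuple comp_mpolyXU -tnth_nth tnth_mktuple split_r.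
rewrite raddf_sum /=; apply: eq_bigr => j _; rewrite comp_mpolyZ comp_mpolyXU -tnth_nth.
by rewrite tnth_mktuple.
Qed.

Lemma act2_wedge M f g : act2K M (wedgeK f g) = wedgeK (compM M f) (compM M g).
Proof.
by rewrite /wedgeK /act2K rmorphB !rmorphM /= -!/(act2K _ _) !act2_inx !act2_iny.
Qed.

Lemma act2_lin M a p q : act2K M (a *: p + q) = a *: act2K M p + act2K M q.
Proof. by rewrite /act2K comp_mpolyD comp_mpolyZ. Qed.

Lemma act2_sum M (I : Type) (r : seq I) (F : I -> {mpoly K[6]}) :
  act2K M (\sum_(i <- r) F i) = \sum_(i <- r) act2K M (F i).
Proof. by rewrite /act2K raddf_sum. Qed.

End Gen6.

Definition pl : seq (nat * nat) :=
  [seq p <- [seq (i, j) | i <- iota 0 10, j <- iota 0 10] | (p.1 < p.2)%N].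
Lemma size_pl : size pl = 45%N. Proof. by []. Qed.
Lemma pl_b : all (fun i => all (fun j => (i < j)%N ==> ((i, j) \in pl)) (iota 0 10)) (iota 0 10).
Proof. by []. Qed.

Lemma pl_mem (i j : 'I_10) : (i < j)%N -> ((i : nat), (j : nat)) \in pl.
Proof.
move=> Hij; have H1 := allP pl_b i; rewrite mem_iota add0n ltn_ord in H1.
have H2 := allP (H1 isT) j; rewrite mem_iota add0n ltn_ord Hij in H2.
exact: H2.
Qed.

Definition pr (e : 'I_45) : 'I_10 * 'I_10 :=
  (inord (nth (0, 0) pl e).1, inord (nth (0, 0) pl e).2)%N.

Lemma pr_ex (i j : 'I_10) : (i < j)%N -> exists e, pr e = (i, j).
Proof.
move=> Hij; have Hm := pl_mem Hij.
have He : (index ((i : nat), (j : nat)) pl < 45)%N by rewrite -size_pl index_mem.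
exists (Ordinal He); rewrite /pr /= nth_index //=.
by congr (_, _); apply: val_inj; rewrite /= inordK.
Qed.

Section Gen7.
Variable K : numFieldType.
Local Notation cub := (@is_cubicK K).
Implicit Types (f g : {mpoly K[3]}).

Definition EE (i j : 'I_10) : {mpoly K[6]} := wedgeK 'X_[mon i] 'X_[mon j].
Definition E' (e : 'I_45) : {mpoly K[6]} := EE (pr e).1 (pr e).2.

Definition spanE (p : {mpoly K[6]}) := exists c : 'rV[K]_45, p = \sum_e c 0 e *: E' e.

Lemma spanE0 : spanE 0.
Proof. by exists 0; rewrite big1 // => e _; rewrite mxE scale0r. Qed.

Lemma spanE_lin a p q : spanE p -> spanE q -> spanE (a *: p + q).
Proof.
move=> [c ->] [d ->]; exists (a *: c + d).
rewrite scaler_sumr -big_split /=; apply: eq_bigr => k _.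
by rewrite !mxE scalerDl scalerA.
Qed.

Lemma spanEZ a p : spanE p -> spanE (a *: p).
Proof. by move=> H; rewrite -[_ *: _]addr0; apply: spanE_lin => //; apply: spanE0. Qed.
Lemma spanED p q : spanE p -> spanE q -> spanE (p + q).
Proof. by move=> H1 H2; rewrite -[p]scale1r; apply: spanE_lin. Qed.

Lemma spanE_sum (I : Type) (r : seq I) (F : I -> {mpoly K[6]}) :
  (forall i, spanE (F i)) -> spanE (\sum_(i <- r) F i).
Proof.
move=> H; elim/big_rec: _ => [|i p _ Hp]; first exact: spanE0.
exact: spanED.
Qed.

Lemma spanE' e : spanE (E' e).
Proof.
exists (delta_mx 0 e); rewrite (bigD1 e) //= big1 ?addr0 ?mxE ?eqxx ?scale1r //.
by move=> j /negbTE Hj; rewrite mxE Hj andbF scale0r.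
Qed.

Lemma wedge_anti (f g : {mpoly K[3]}) : wedgeK g f = - wedgeK f g.
Proof. by rewrite /wedgeK opprB. Qed.

Lemma spanEE i j : spanE (EE i j).
Proof.
case: (ltngtP i j) => [Hij|Hij|/val_inj ->].
- by have [e He] := pr_ex Hij; have := spanE' e; rewrite /E' He.
- have [e He] := pr_ex Hij; have := spanE' e; rewrite /E' He /EE wedge_anti.
  by move=> H; rewrite -[wedgeK _ _]opprK -scaleN1r; apply: spanEZ.
- by rewrite /EE /wedgeK subrr; apply: spanE0.
Qed.

Lemma inx_sum (a : 'I_10 -> K) (F : 'I_10 -> {mpoly K[3]}) :
  inxK (\sum_i a i *: F i) = \sum_i a i *: inxK (F i).
Proof. by rewrite /inxK raddf_sum /=; apply: eq_bigr => i _; rewrite comp_mpolyZ. Qed.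
Lemma iny_sum (a : 'I_10 -> K) (F : 'I_10 -> {mpoly K[3]}) :
  inyK (\sum_i a i *: F i) = \sum_i a i *: inyK (F i).
Proof. by rewrite /inyK raddf_sum /=; apply: eq_bigr => i _; rewrite comp_mpolyZ. Qed.

Lemma wedge_expand0 (a b : 'I_10 -> K) :
  wedgeK (\sum_i a i *: 'X_[mon i]) (\sum_i b i *: 'X_[mon i]) =
  \sum_i \sum_j (a i * b j) *: EE i j.
Proof.
rewrite /wedgeK !inx_sum !iny_sum !big_distrlr /=.
rewrite /EE /wedgeK.
under [RHS]eq_bigr => i _ do (under eq_bigr => j _ do rewrite scalerBr; rewrite sumrB).
rewrite sumrB; congr (_ - _).
  apply: eq_bigr => i _; apply: eq_bigr => j _.
  by rewrite -scalerAl -scalerAr scalerA.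
rewrite exchange_big /=; apply: eq_bigr => i _; apply: eq_bigr => j _.
by rewrite -scalerAl -scalerAr scalerA mulrC.
Qed.

Lemma wedge_expand f g : cub f -> cub g ->
  wedgeK f g = \sum_i \sum_j (f@_(mon i) * g@_(mon j)) *: EE i j.
Proof. by move=> Hf Hg; rewrite {1}(cubicE Hf) {1}(cubicE Hg) wedge_expand0. Qed.

Lemma spanE_wedge f g : cub f -> cub g -> spanE (wedgeK f g).
Proof.
move=> Hf Hg; rewrite wedge_expand //; apply: spanE_sum => i; apply: spanE_sum => j.
by apply: spanEZ; apply: spanEE.
Qed.

End Gen7.

Section Gen8.
Variable K : numFieldType.
Local Notation cub := (@is_cubicK K).
Implicit Types (f g : {mpoly K[3]}) (l m : 'rV[K]_3).
Variable R : {mpoly K[3]} -> {mpoly K[3]} -> {mpoly K[3]} -> K.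
Hypothesis HR : is_RK R.

Definition phi (p : {mpoly K[6]}) : 'rV[K]_10 := \row_k Phi R p 'X_[mon k].
Definition FF : 'M[K]_(45, 10) := \matrix_(e, k) Phi R (E' K e) 'X_[mon k].

Lemma PhiZ a p h : Phi R (a *: p) h = a * Phi R p h.
Proof. by rewrite -[_ *: _]addr0 Phi_lin Phi0 addr0. Qed.

Lemma phi_span (c : 'rV[K]_45) : phi (\sum_e c 0 e *: E' K e) = c *m FF.
Proof.
apply/rowP => k; rewrite !mxE Phi_sum; apply: eq_bigr => e _.
by rewrite PhiZ !mxE.
Qed.

Lemma phi_le p : spanE p -> (phi p <= FF)%MS.
Proof. by case=> c ->; rewrite phi_span submxMl. Qed.

Definition rowpt (a b c : K) : 'rV[K]_10 :=
  \row_k (a ^+ mon k ord0 * b ^+ mon k o1 * c ^+ mon k o2).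

Lemma prod3K (F : 'I_3 -> K) : \prod_(i < 3) F i = F ord0 * F o1 * F o2.
Proof. rewrite !big_ord_recr big_ord0 /= mul1r; congr (F _ * F _ * F _); apply: val_inj; reflexivity. Qed.

Lemma rowpt_le a b c l m :
  crs l m ord0 = a -> crs l m o1 = b -> crs l m o2 = c -> (rowpt a b c <= FF)%MS.
Proof.
move=> Ha Hb Hc.
have Hw := spanE_wedge (cubic_lin3 l) (cubic_lin3 m).
have := phi_le Hw.
have -> : phi (wedgeK (linformK l ^+ 3) (linformK m ^+ 3)) = 2%:R *: rowpt a b c.
  apply/rowP => k; rewrite !mxE Phi_wedge //; try exact: cubic_lin3; last exact: is_cubicK_X.
  by rewrite R_eval //; try exact: is_cubicK_X; rewrite mevalX prod3K Ha Hb Hc.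
move=> H; rewrite -[rowpt a b c]scale1r -(@mulVf _ 2%:R) ?pnatr_eq0 // -scalerA.
exact: scalemx_sub.
Qed.

Lemma rp_ab0 a b : (rowpt a b 0 <= FF)%MS.
Proof. by apply: (@rowpt_le _ _ _ (vec3 0 0 1) (vec3 b (-a) 0)); rewrite /crs /= !mxE /=; ring. Qed.
Lemma rp_a0c a c : (rowpt a 0 c <= FF)%MS.
Proof. by apply: (@rowpt_le _ _ _ (vec3 0 1 0) (vec3 (-c) 0 a)); rewrite /crs /= !mxE /=; ring. Qed.
Lemma rp_0bc b c : (rowpt 0 b c <= FF)%MS.
Proof. by apply: (@rowpt_le _ _ _ (vec3 1 0 0) (vec3 0 c (-b))); rewrite /crs /= !mxE /=; ring. Qed.
Lemma rp_111 : (rowpt 1 1 1 <= FF)%MS.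
Proof. by apply: (@rowpt_le _ _ _ (vec3 1 (-1) 0) (vec3 0 1 (-1))); rewrite /crs /= !mxE /=; ring. Qed.

Local Notation "'D' n" := (delta_mx 0 (@Ordinal 10 n isT) : 'rV[K]_10) (at level 0, n at level 0).

Lemma D_le2 (v : 'rV[K]_10) : (2%:R *: v <= FF)%MS -> (v <= FF)%MS.
Proof.
move=> H; rewrite -[v]scale1r -(@mulVf _ 2%:R) ?pnatr_eq0 // -scalerA.
exact: scalemx_sub.
Qed.

Lemma D0 : D 0 = rowpt 1 0 0.
Proof.
apply/rowP => j; rewrite !mxE.
case: j => [[|[|[|[|[|[|[|[|[|[|j]]]]]]]]]] Hj] //=; rewrite /mon !mnmE /=; ring.
Qed.

Lemma D1 : D 1 = rowpt 0 1 0.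
Proof.
apply/rowP => j; rewrite !mxE.
case: j => [[|[|[|[|[|[|[|[|[|[|j]]]]]]]]]] Hj] //=; rewrite /mon !mnmE /=; ring.
Qed.

Lemma D2 : D 2 = rowpt 0 0 1.
Proof.
apply/rowP => j; rewrite !mxE.
case: j => [[|[|[|[|[|[|[|[|[|[|j]]]]]]]]]] Hj] //=; rewrite /mon !mnmE /=; ring.
Qed.

Lemma D3 : 2%:R *: D 3 = rowpt 1 1 0 - rowpt 1 (-1) 0 - 2%:R *: rowpt 0 1 0.
Proof.
apply/rowP => j; rewrite !mxE.
case: j => [[|[|[|[|[|[|[|[|[|[|j]]]]]]]]]] Hj] //=; rewrite /mon !mnmE /=; ring.
Qed.

Lemma D4 : 2%:R *: D 4 = rowpt 1 1 0 + rowpt 1 (-1) 0 - 2%:R *: rowpt 1 0 0.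
Proof.
apply/rowP => j; rewrite !mxE.
case: j => [[|[|[|[|[|[|[|[|[|[|j]]]]]]]]]] Hj] //=; rewrite /mon !mnmE /=; ring.
Qed.

Lemma D5 : 2%:R *: D 5 = rowpt 1 0 1 - rowpt 1 0 (-1) - 2%:R *: rowpt 0 0 1.
Proof.
apply/rowP => j; rewrite !mxE.
case: j => [[|[|[|[|[|[|[|[|[|[|j]]]]]]]]]] Hj] //=; rewrite /mon !mnmE /=; ring.
Qed.

Lemma D6 : 2%:R *: D 6 = rowpt 1 0 1 + rowpt 1 0 (-1) - 2%:R *: rowpt 1 0 0.
Proof.
apply/rowP => j; rewrite !mxE.
case: j => [[|[|[|[|[|[|[|[|[|[|j]]]]]]]]]] Hj] //=; rewrite /mon !mnmE /=; ring.
Qed.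

Lemma D7 : 2%:R *: D 7 = rowpt 0 1 1 - rowpt 0 1 (-1) - 2%:R *: rowpt 0 0 1.
Proof.
apply/rowP => j; rewrite !mxE.
case: j => [[|[|[|[|[|[|[|[|[|[|j]]]]]]]]]] Hj] //=; rewrite /mon !mnmE /=; ring.
Qed.

Lemma D8 : 2%:R *: D 8 = rowpt 0 1 1 + rowpt 0 1 (-1) - 2%:R *: rowpt 0 1 0.
Proof.
apply/rowP => j; rewrite !mxE.
case: j => [[|[|[|[|[|[|[|[|[|[|j]]]]]]]]]] Hj] //=; rewrite /mon !mnmE /=; ring.
Qed.

Lemma D9 : D 9 = rowpt 1 1 1 - D 0 - D 1 - D 2 - D 3 - D 4 - D 5 - D 6 - D 7 - D 8.
Proof.
apply/rowP => j; rewrite !mxE.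
case: j => [[|[|[|[|[|[|[|[|[|[|j]]]]]]]]]] Hj] //=; rewrite /mon !mnmE /=; ring.
Qed.

Lemma subB_le (A B : 'rV[K]_10) : (A <= FF)%MS -> (B <= FF)%MS -> ((A - B)%R <= FF)%MS.
Proof. by move=> H1 H2; apply: addmx_sub => //; rewrite -scaleN1r; apply: scalemx_sub. Qed.
Lemma subD_le (A B : 'rV[K]_10) : (A <= FF)%MS -> (B <= FF)%MS -> ((A + B)%R <= FF)%MS.
Proof. by move=> H1 H2; apply: addmx_sub. Qed.
Lemma subZ_le a (A : 'rV[K]_10) : (A <= FF)%MS -> ((a *: A)%R <= FF)%MS.
Proof. by move=> H1; apply: scalemx_sub. Qed.

Lemma FF_full : row_full FF.
Proof.
have h0 := rp_ab0; have h1 := rp_a0c; have h2 := rp_0bc; have h3 := rp_111.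
have d0 : (D 0 <= FF)%MS by rewrite D0.
have d1 : (D 1 <= FF)%MS by rewrite D1.
have d2 : (D 2 <= FF)%MS by rewrite D2.
have d3 : (D 3 <= FF)%MS by apply: D_le2; rewrite D3; repeat first [apply: subB_le | apply: subD_le | apply: subZ_le | done].
have d4 : (D 4 <= FF)%MS by apply: D_le2; rewrite D4; repeat first [apply: subB_le | apply: subD_le | apply: subZ_le | done].
have d5 : (D 5 <= FF)%MS by apply: D_le2; rewrite D5; repeat first [apply: subB_le | apply: subD_le | apply: subZ_le | done].
have d6 : (D 6 <= FF)%MS by apply: D_le2; rewrite D6; repeat first [apply: subB_le | apply: subD_le | apply: subZ_le | done].
have d7 : (D 7 <= FF)%MS by apply: D_le2; rewrite D7; repeat first [apply: subB_le | apply: subD_le | apply: subZ_le | done].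
have d8 : (D 8 <= FF)%MS by apply: D_le2; rewrite D8; repeat first [apply: subB_le | apply: subD_le | apply: subZ_le | done].
have d9 : (D 9 <= FF)%MS by rewrite D9; repeat first [apply: subB_le | apply: subD_le | apply: subZ_le | done].
rewrite -sub1mx; apply/row_subP => k; rewrite row1.
by case: k => [[|[|[|[|[|[|[|[|[|[|k]]]]]]]]]] Hk] //; rewrite (_ : Hk = isT) //; apply: eq_irrelevance.
Qed.

End Gen8.

Lemma inj_rank (K : fieldType) m n (G : 'M[K]_(m, n)) :
  (forall x : 'rV[K]_m, x *m G = 0 -> x = 0) -> \rank G = m.
Proof.
move=> H; have Hk : kermx G = 0.
  apply/row_matrixP => i; rewrite row0; apply: H.
  by rewrite -row_mul mulmx_ker row0.
have := mxrank_ker G; rewrite Hk mxrank0 => /esym /eqP.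
rewrite subn_eq0 => Hle; apply/eqP; rewrite eqn_leq rank_leq_row //.
Qed.

Lemma la_main (K : fieldType) (B : 'M[K]_(35, 45)) (F : 'M[K]_(45, 10)) :
  (forall x : 'rV[K]_35, x *m B = 0 -> x = 0) -> B *m F = 0 -> row_full F ->
  forall c : 'rV[K]_45, c *m F = 0 -> exists y : 'rV[K]_35, c = y *m B.
Proof.
move=> Hinj HBF Hfull c HcF.
have rB := inj_rank Hinj.
have rK : \rank (kermx F) = 35%N by rewrite mxrank_ker (eqP Hfull).
have sB : (B <= kermx F)%MS by apply/sub_kermxP.
have sKB : (kermx F <= B)%MS.
  have [_ E] := mxrank_leqif_sup sB.
  by rewrite -E rB rK.
have : (c <= B)%MS by apply: submx_trans sKB; apply/sub_kermxP.
by case/submxP => y ->; exists y.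
Qed.

Section Gen10.
Variable K : numFieldType.
Local Notation cub := (@is_cubicK K).
Implicit Types (f g h : {mpoly K[3]}).

Definition in_Lambda2K (p : {mpoly K[6]}) : Prop :=
  exists (k : nat) (a b : 'I_k -> {mpoly K[3]}),
    (forall i, cub (a i) /\ cub (b i)) /\ p = \sum_(i < k) wedgeK (a i) (b i).
Definition lin_subspaceK (U : {mpoly K[6]} -> Prop) : Prop :=
  U 0 /\ (forall (a : K) u v, U u -> U v -> U (a *: u + v)).
Definition has_dimK (U : {mpoly K[6]} -> Prop) (d : nat) : Prop :=
  exists b : 'I_d -> {mpoly K[6]},
    (forall c : 'I_d -> K, \sum_(i < d) c i *: b i = 0 -> forall i, c i = 0) /\
    (forall p, U p <-> exists c : 'I_d -> K, p = \sum_(i < d) c i *: b i).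
Definition SL3_invariantK (U : {mpoly K[6]} -> Prop) : Prop :=
  forall M : 'M[K]_3, \det M = 1 -> forall u, U u -> U (act2K M u).
Definition SL3_irreducibleK (U : {mpoly K[6]} -> Prop) : Prop :=
  (exists u, U u /\ u <> 0) /\
  forall V : {mpoly K[6]} -> Prop, lin_subspaceK V -> SL3_invariantK V ->
    (forall v, V v -> U v) -> (forall v, V v -> v = 0) \/ (forall u, U u <-> V u).
Definition is_S51K (W : {mpoly K[6]} -> Prop) : Prop :=
  [/\ forall w, W w -> in_Lambda2K w, has_dimK W 35, SL3_invariantK W & SL3_irreducibleK W].
Definition indepK (f g : {mpoly K[3]}) : Prop :=
  forall a b : K, a *: f + b *: g = 0 -> a = 0 /\ b = 0.
Definition R_vanishesK (R : {mpoly K[3]} -> {mpoly K[3]} -> {mpoly K[3]} -> K)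
  (f g : {mpoly K[3]}) : Prop :=
  forall h, cub h -> R f g h = 0.
Definition in_NK (R : {mpoly K[3]} -> {mpoly K[3]} -> {mpoly K[3]} -> K)
  (f0 g0 : {mpoly K[3]}) : Prop :=
  forall (k : nat) (ms : 'I_k -> 'X_{1..6}) (P : {mpoly K[k]}),
    (forall f g, cub f -> cub g -> indepK f g -> R_vanishesK R f g ->
       P.@[fun i => (wedgeK f g)@_(ms i)] = 0) ->
    P.@[fun i => (wedgeK f0 g0)@_(ms i)] = 0.

Variable R : {mpoly K[3]} -> {mpoly K[3]} -> {mpoly K[3]} -> K.
Hypothesis HR : is_RK R.

Lemma Phi_h p h : cub h -> Phi R p h = \sum_k h@_(mon k) * Phi R p 'X_[mon k].
Proof.
move=> Hh; rewrite /Phi.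
under eq_bigr => i _ do under eq_bigr => j _ do
  rewrite {1}(cubicE Hh) (R3sum HR _ _ (fun k => is_cubicK_X _ k) (is_cubicK_X _ i) (is_cubicK_X _ j)).
under eq_bigr => i _ do under eq_bigr => j _ do rewrite mulr_sumr.
under [RHS]eq_bigr => k _ do (rewrite mulr_sumr; under eq_bigr => i _ do rewrite mulr_sumr).
rewrite [RHS]exchange_big /=; apply: eq_bigr => i _.
rewrite [RHS]exchange_big /=; apply: eq_bigr => j _.
apply: eq_bigr => k _; ring.
Qed.

Lemma phi0_all p : phi R p = 0 -> forall h, cub h -> Phi R p h = 0.
Proof.
move=> H h Hh; rewrite Phi_h // big1 // => k _.
by have := congr1 (fun r : 'rV[K]_10 => r 0 k) H; rewrite !mxE => ->; rewrite mulr0.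
Qed.

Lemma Phi_L2 (k : nat) (a b : 'I_k -> {mpoly K[3]}) h :
  (forall i, cub (a i) /\ cub (b i)) -> cub h ->
  Phi R (\sum_(i < k) wedgeK (a i) (b i)) h = \sum_(i < k) 2%:R * R (a i) (b i) h.
Proof.
move=> Hab Hh; rewrite Phi_sum; apply: eq_bigr => i _.
by case: (Hab i) => Ha Hb; rewrite Phi_wedge.
Qed.

Lemma compM_surj M h : M \in unitmx -> cub h -> exists h', cub h' /\ h = compM M h'.
Proof.
move=> HM /cubic_span [c ->].
exists (\sum_k c k *: linformK (nv k *m invmx M) ^+ 3); split.
  by apply: is_cubicK_sum => k _; apply: is_cubicKZ; apply: cubic_lin3.
rewrite compM_sum; apply: eq_bigr => k _; rewrite compM_cube -mulmxA mulVmx // mulmx1.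
by [].
Qed.

End Gen10.

Section Gen11.
Variable K : numFieldType.
Local Notation cub := (@is_cubicK K).
Implicit Types (f g h : {mpoly K[3]}).

Lemma W_ker (R : {mpoly K[3]} -> {mpoly K[3]} -> {mpoly K[3]} -> K) (HR : is_RK R)
  (W : {mpoly K[6]} -> Prop) (HW : is_S51K W) :
  forall u, W u -> forall h, cub h -> Phi R u h = 0.
Proof.
case: HW => HL2 [b [Hbi Hbs]] Hinv [_ Hirr].
have W0 : W 0 by apply/Hbs; exists (fun _ => 0); rewrite big1 // => i _; rewrite scale0r.
have Wlin : forall a u v, W u -> W v -> W (a *: u + v).
  move=> a u v /Hbs [c ->] /Hbs [d ->]; apply/Hbs; exists (fun i => a * c i + d i).
  by rewrite scaler_sumr -big_split /=; apply: eq_bigr => i _; rewrite scalerDl scalerA.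
have Wsum : forall x : 'I_35 -> K, W (\sum_i x i *: b i) by move=> x; apply/Hbs; exists x.
pose V := fun u => W u /\ forall h, cub h -> Phi R u h = 0.
have Vsub : lin_subspaceK V.
  split; first by split=> // h _; apply: Phi0.
  move=> a u v [Wu Pu] [Wv Pv]; split; first exact: Wlin.
  by move=> h Hh; rewrite Phi_lin Pu // Pv // mulr0 addr0.
have Vinv : SL3_invariantK V.
  move=> M HM u [Wu Pu]; split; first exact: Hinv.
  have HMu : M \in unitmx by rewrite unitmxE HM unitr1.
  move: Pu; have [k [a [bb [Hab ->]]]] := HL2 u Wu => Pu h Hh.
  have [h' [Hh' ->]] := compM_surj HMu Hh.
  rewrite act2_sum; under eq_bigr => i _ do rewrite act2_wedge.
  have Hab' : forall i, cub (compM M (a i)) /\ cub (compM M (bb i)).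
    by move=> i; case: (Hab i) => H1 H2; split; apply: compM_cubic.
  rewrite (Phi_L2 HR Hab' (compM_cubic M Hh')).
  rewrite -[RHS](Pu h' Hh') (Phi_L2 HR Hab Hh'); apply: eq_bigr => i _.
  by case: (Hab i) => H1 H2; rewrite R_compM // HM expr1n mul1r.
case: (Hirr V Vsub Vinv (fun v Hv => Hv.1)) => [H0|Heq]; last first.
  by move=> u /Heq [].
exfalso.
pose G : 'M[K]_(35, 10) := \matrix_(i, k) Phi R (b i) 'X_[mon k].
have Hinj : forall x : 'rV[K]_35, x *m G = 0 -> x = 0.
  move=> x HxG.
  have Hphi : phi R (\sum_i x 0 i *: b i) = 0.
    apply/rowP => k; rewrite !mxE Phi_sum.
    have := congr1 (fun r : 'rV[K]_10 => r 0 k) HxG; rewrite !mxE => E.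
    rewrite -[RHS]E; apply: eq_bigr => i _; rewrite PhiZ mxE //.
  have HV : V (\sum_i x 0 i *: b i) by split; [exact: Wsum | exact: phi0_all].
  have Hz := H0 _ HV.
  by apply/rowP => i; rewrite mxE; apply: (Hbi (fun i => x 0 i)).
have := inj_rank Hinj; have := rank_leq_col G => /[swap] ->.
by [].
Qed.

End Gen11.

Section Gen12.
Variable K : numFieldType.
Local Notation cub := (@is_cubicK K).
Implicit Types (f g h : {mpoly K[3]}).

Lemma L2_spanE p : in_Lambda2K p -> @spanE K p.
Proof.
case=> k [a [b [Hab ->]]]; apply: spanE_sum => i.
by case: (Hab i) => H1 H2; apply: spanE_wedge.
Qed.

Lemma W_closed (R : {mpoly K[3]} -> {mpoly K[3]} -> {mpoly K[3]} -> K) (HR : is_RK R)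
  (W : {mpoly K[6]} -> Prop) (HW : is_S51K W) p :
  in_Lambda2K p -> phi R p = 0 -> W p.
Proof.
move=> Hp Hphi.
have Wk := W_ker HR HW.
case: HW => HL2 [b [Hbi Hbs]] _ _.
have Hbspan : forall i, exists c : 'rV[K]_45, b i = \sum_e c 0 e *: E' K e.
  move=> i; apply: L2_spanE; apply: HL2; apply/Hbs.
  exists (fun j => (j == i)%:R); rewrite (bigD1 i) //= eqxx scale1r big1 ?addr0 //.
  by move=> j /negbTE ->; rewrite scale0r.
have [cf Hcf] := fin_all_exists Hbspan.
pose B : 'M[K]_(35, 45) := \matrix_(i, e) cf i 0 e.
have HxB : forall x : 'rV[K]_35, \sum_i x 0 i *: b i = \sum_e (x *m B) 0 e *: E' K e.
  move=> x; under eq_bigr => i _ do rewrite Hcf scaler_sumr.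
  rewrite exchange_big /=; apply: eq_bigr => e _; rewrite !mxE scaler_suml.
  by apply: eq_bigr => i _; rewrite !mxE scalerA.
have Binj : forall x : 'rV[K]_35, x *m B = 0 -> x = 0.
  move=> x Hx; have H0 : \sum_i x 0 i *: b i = 0.
    by rewrite HxB Hx big1 // => e _; rewrite mxE scale0r.
  by apply/rowP => i; rewrite mxE; apply: (Hbi (fun i => x 0 i)).
have BF : B *m FF R = 0.
  apply/row_matrixP => i; rewrite row_mul row0.
  have -> : row i B = cf i by apply/rowP => e; rewrite !mxE.
  rewrite -phi_span -Hcf; apply/rowP => k; rewrite !mxE.
  apply: Wk; last exact: is_cubicK_X.
  by apply/Hbs; exists (fun j => (j == i)%:R); rewrite (bigD1 i) //= eqxx scale1r big1 ?addr0 //;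
     move=> j /negbTE ->; rewrite scale0r.
have [c Hc] := L2_spanE Hp.
have HcF : c *m FF R = 0 by rewrite -phi_span -Hc.
have [y Hy] := la_main Binj BF (FF_full HR) HcF.
apply/Hbs; exists (fun i => y 0 i); rewrite HxB -Hy; exact: Hc.
Qed.

End Gen12.

Section Gen13.
Variable K : numFieldType.
Local Notation cub := (@is_cubicK K).
Implicit Types (f g h : {mpoly K[3]}).

Definition kk := #|{: 'I_10 * 'I_10}|.
Definition ms (e : 'I_kk) : 'X_{1..6} :=
  coef6 (@enum_val _ (pred_of_simpl predT) e).1 (@enum_val _ (pred_of_simpl predT) e).2.

Definition Pk (R : {mpoly K[3]} -> {mpoly K[3]} -> {mpoly K[3]} -> K) (k : 'I_10) : {mpoly K[kk]} :=
  \sum_(e < kk) R 'X_[mon (@enum_val _ (pred_of_simpl predT) e).1]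
                  'X_[mon (@enum_val _ (pred_of_simpl predT) e).2] 'X_[mon k] *: 'X_e.

Lemma Pk_eval R k (p : {mpoly K[6]}) :
  (Pk R k).@[fun e => p@_(ms e)] = Phi R p 'X_[mon k].
Proof.
rewrite /Pk raddf_sum /=.
under eq_bigr => e _ do rewrite mevalZ mevalXU /ms.
pose F := fun x : 'I_10 * 'I_10 =>
  R 'X_[mon x.1] 'X_[mon x.2] 'X_[mon k] * p@_(coef6 x.1 x.2).
rewrite -(big_enum_val (A := pred_of_simpl predT) F) /F /Phi pair_big /=.
apply: eq_bigr => x _; exact: mulrC.
Qed.

End Gen13.

Section Gen14.
Variable K : numFieldType.
Local Notation cub := (@is_cubicK K).

Theorem mainK (R : {mpoly K[3]} -> {mpoly K[3]} -> {mpoly K[3]} -> K) (HR : is_RK R)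
  (W : {mpoly K[6]} -> Prop) (HW : is_S51K W)
  (f0 g0 : {mpoly K[3]}) (Hf0 : cub f0) (Hg0 : cub g0) (Hfg0 : indepK f0 g0) :
  W (wedgeK f0 g0) <-> in_NK R f0 g0.
Proof.
split.
  move=> Hw k ms0 P HP; apply: HP => // h Hh.
  have := W_ker HR HW Hw Hh; rewrite Phi_wedge // => /eqP.
  by rewrite mulf_eq0 pnatr_eq0 /= => /eqP.
move=> HN; apply: (W_closed HR HW).
  exists 1%N, (fun _ => f0), (fun _ => g0); split => //.
  by rewrite big_ord1.
apply/rowP => k; rewrite !mxE -Pk_eval; apply: HN => f g Hf Hg _ Hv.
by rewrite Pk_eval Phi_wedge ?Hv ?mulr0 //; apply: is_cubicK_X.
Qed.

End Gen14.

Unset Implicit Arguments.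

(* P(Ghat(1,9) cap S_(5,1)) = N, stated line by line: for every line <f0,g0>
   of P^9, its Pluecker point f0 /\ g0 lies in S_(5,1) iff <f0,g0> is in N. *)
Theorem mainTheorem11
  (R : {mpoly CC[3]} -> {mpoly CC[3]} -> {mpoly CC[3]} -> CC) (HR : is_R R)
  (W : {mpoly CC[6]} -> Prop) (HW : is_S51 W)
  (f0 g0 : {mpoly CC[3]}) (Hf0 : is_cubic f0) (Hg0 : is_cubic g0)
  (Hfg0 : indep f0 g0) :
  W (wedge f0 g0) <-> in_N R f0 g0.
Proof.
exact: (@mainK (CC : numFieldType) R HR W HW f0 g0 Hf0 Hg0 Hfg0).
Qed.
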